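(* Let $L_0\in\mathbb{R}^{n\times n}$ have reduced SVD $L_0=U\Sigma V^*$, let $S_0\in\mathbb{R}^{n\times n}$ with support $\Omega$, and let $\lambda>0$. Assume $\|\mathcal{P}_\Omega\mathcal{P}_T\|<1$. Then $(L_0,S_0)$ is the unique solution of \[ \text{minimize } \|L\|_*+\lambda\|S\|_1\quad\text{subject to}\quad L+S=L_0+S_0 \] if there is a pair $(W,F)$ of $n\times n$ matrices obeying \[ UV^*+W=\lambda(\mathrm{sgn}(S_0)+F), \] with $\mathcal{P}_TW=0$, $\|W\|<1$, $\mathcal{P}_\Omega F=0$ and $\|F\|_\infty<1$.
   Context: $U,V\in\mathbb{R}^{n\times r}$ have orthonormal columns. $T=\{UX^*+YV^*: X,Y\in\mathbb{R}^{n\times r}\}$ and $\mathcal{P}_T$ is the orthogonal projection onto $T$ with respect to the trace inner product $\langle X,Y\rangle=\mathrm{trace}(X^*Y)$. $\mathcal{P}_\Omega X$ keeps the entries of $X$ in $\Omega$ and zeroes the others. For linear maps on matrices, $\|\cdot\|$ is the operator norm with respect to the Frobenius norm; for matrices, $\|W\|$ is the spectral norm (largest singular value), $\|F\|_\infty=\max_{ij}|F_{ij}|$, $\|\cdot\|_*$ the nuclear norm and $\|S\|_1=\sum_{ij}|S_{ij}|$. $\mathrm{sgn}(S_0)$ is the entrywise sign, with $\mathrm{sgn}(0)=0$. *)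

(* Defs.v *)
From HB Require Import structures.
From mathcomp Require Import all_boot all_order all_algebra.
From mathcomp Require Import boolp classical_sets reals.
Set Implicit Arguments. Unset Strict Implicit. Unset Printing Implicit Defensive.
Import Order.TTheory GRing.Theory Num.Theory.
Local Open Scope ring_scope.
Local Open Scope classical_set_scope.

Section Defs.
Variable R : realType.

Definition mxdot (m n : nat) (X Y : 'M[R]_(m, n)) : R := \tr (X^T *m Y).

Definition frob (m n : nat) (X : 'M[R]_(m, n)) : R := Num.sqrt (mxdot X X).

Definition orthogonal_mx (n : nat) (P : 'M[R]_n) : Prop := P^T *m P = 1%:M.

Definition is_sv_vector (n : nat) (X : 'M[R]_n) (d : 'rV[R]_n) : Prop :=
  (forall i, 0 <= d 0 i) /\
  exists P Q : 'M[R]_n, orthogonal_mx P /\ orthogonal_mx Q /\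
    X = P *m diag_mx d *m Q^T.

Definition nucnorm (n : nat) (X : 'M[R]_n) : R :=
  sup [set t | exists d, is_sv_vector X d /\ t = \sum_i d 0 i].

Definition specnorm (n : nat) (X : 'M[R]_n) : R :=
  sup [set t | exists d, is_sv_vector X d /\ t = \big[Num.max/0]_i d 0 i].

Definition l1norm (m n : nat) (S : 'M[R]_(m, n)) : R :=
  \sum_i \sum_j `|S i j|.

Definition linfnorm (m n : nat) (F : 'M[R]_(m, n)) : R :=
  \big[Num.max/0]_i \big[Num.max/0]_j `|F i j|.

Definition sgnmx (m n : nat) (S : 'M[R]_(m, n)) : 'M[R]_(m, n) :=
  \matrix_(i, j) Num.sg (S i j).

Definition POmega (m n : nat) (S0 X : 'M[R]_(m, n)) : 'M[R]_(m, n) :=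
  \matrix_(i, j) (if S0 i j != 0 then X i j else 0).

Definition inT (n r : nat) (U V : 'M[R]_(n, r)) (Z : 'M[R]_n) : Prop :=
  exists X Y : 'M[R]_(n, r), Z = U *m X^T + Y *m V^T.

Definition is_orth_proj_T (n r : nat) (U V : 'M[R]_(n, r))
  (PT : 'M[R]_n -> 'M[R]_n) : Prop :=
  forall X, inT U V (PT X) /\ (forall Z, inT U V Z -> mxdot (X - PT X) Z = 0).

Definition opnorm (n : nat) (f : 'M[R]_n -> 'M[R]_n) : R :=
  sup [set t | exists X : 'M[R]_n, frob X <= 1 /\ t = frob (f X)].

End Defs.

(* Main.v *)
Require Import Defs.
From HB Require Import structures.
From mathcomp Require Import all_boot all_order all_algebra.
From mathcomp Require Import boolp classical_sets reals.
From mathcomp Require Import complex.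
From mathcomp Require Import ring lra.
Import Order.TTheory GRing.Theory Num.Theory.
Local Open Scope ring_scope.


Section Dot.
Context {R : realType}.

Lemma mxdotE {m n} (X Y : 'M[R]_(m, n)) :
  mxdot X Y = \sum_i \sum_j X i j * Y i j.
Proof.
rewrite /mxdot /mxtrace exchange_big /=; apply: eq_bigr => j _.
by rewrite !mxE; apply: eq_bigr => i _; rewrite mxE.
Qed.

Lemma mxdotC {m n} (X Y : 'M[R]_(m, n)) : mxdot X Y = mxdot Y X.
Proof. by rewrite !mxdotE; apply: eq_bigr => i _; apply: eq_bigr => j _; rewrite mulrC. Qed.

Lemma mxdotDr {m n} (X Y Z : 'M[R]_(m, n)) : mxdot X (Y + Z) = mxdot X Y + mxdot X Z.
Proof. by rewrite /mxdot mulmxDr mxtraceD. Qed.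

Lemma mxdotDl {m n} (X Y Z : 'M[R]_(m, n)) : mxdot (Y + Z) X = mxdot Y X + mxdot Z X.
Proof. by rewrite mxdotC mxdotDr !(mxdotC X). Qed.

Lemma mxdotZr {m n} a (X Y : 'M[R]_(m, n)) : mxdot X (a *: Y) = a * mxdot X Y.
Proof. by rewrite /mxdot -scalemxAr mxtraceZ. Qed.

Lemma mxdotZl {m n} a (X Y : 'M[R]_(m, n)) : mxdot (a *: X) Y = a * mxdot X Y.
Proof. by rewrite mxdotC mxdotZr mxdotC. Qed.

Lemma mxdotNr {m n} (X Y : 'M[R]_(m, n)) : mxdot X (- Y) = - mxdot X Y.
Proof. by rewrite -scaleN1r mxdotZr mulN1r. Qed.

Lemma mxdotNl {m n} (X Y : 'M[R]_(m, n)) : mxdot (- X) Y = - mxdot X Y.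
Proof. by rewrite mxdotC mxdotNr mxdotC. Qed.

Lemma mxdotBr {m n} (X Y Z : 'M[R]_(m, n)) : mxdot X (Y - Z) = mxdot X Y - mxdot X Z.
Proof. by rewrite mxdotDr mxdotNr. Qed.

Lemma mxdotBl {m n} (X Y Z : 'M[R]_(m, n)) : mxdot (Y - Z) X = mxdot Y X - mxdot Z X.
Proof. by rewrite mxdotDl mxdotNl. Qed.

Lemma mxdot0r {m n} (X : 'M[R]_(m, n)) : mxdot X 0 = 0.
Proof. by rewrite /mxdot mulmx0 linear0. Qed.

Lemma mxdot0l {m n} (X : 'M[R]_(m, n)) : mxdot 0 X = 0.
Proof. by rewrite mxdotC mxdot0r. Qed.

Lemma mxdot_ge0 {m n} (X : 'M[R]_(m, n)) : 0 <= mxdot X X.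
Proof. by rewrite mxdotE; apply: sumr_ge0 => i _; apply: sumr_ge0 => j _; rewrite -expr2 sqr_ge0. Qed.

Lemma mxdot_eq0 {m n} {X : 'M[R]_(m, n)} : mxdot X X = 0 -> X = 0.
Proof.
rewrite mxdotE => /eqP; rewrite psumr_eq0; last first.
  by move=> i _; apply: sumr_ge0 => j _; rewrite -expr2 sqr_ge0.
move=> /allP H; apply/matrixP => i j; rewrite mxE.
have /H : i \in index_enum 'I_m by rewrite mem_index_enum.
rewrite /= psumr_eq0; last by move=> k _; rewrite -expr2 sqr_ge0.
move=> /allP /(_ j); rewrite mem_index_enum => /(_ isT) /eqP.
by move/eqP; rewrite -expr2 sqrf_eq0 => /eqP.
Qed.

Lemma mxdotMl {m n p} (A : 'M[R]_(m, n)) (X : 'M[R]_(n, p)) Y :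
  mxdot (A *m X) Y = mxdot X (A^T *m Y).
Proof. by rewrite /mxdot trmx_mul !mulmxA. Qed.

Lemma mxdotMr {m n p} (B : 'M[R]_(n, p)) (X : 'M[R]_(m, n)) Y :
  mxdot (X *m B) Y = mxdot X (Y *m B^T).
Proof. by rewrite /mxdot trmx_mul -mulmxA mxtrace_mulC !mulmxA. Qed.

Lemma mxdot_tr {m n} (X Y : 'M[R]_(m, n)) : mxdot X^T Y^T = mxdot X Y.
Proof. by rewrite /mxdot trmxK -mxtrace_tr trmx_mul trmxK mxtrace_mulC. Qed.

Lemma mxdot_row {n} (u v : 'rV[R]_n) : mxdot u v = (u *m v^T) 0 0.
Proof.
rewrite /mxdot mxtrace_mulC -[v *m u^T]trmxK trmx_mul trmxK /mxtrace big_ord1 mxE.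
by [].
Qed.

Lemma mxdot_CS {m n} (X Y : 'M[R]_(m, n)) :
  mxdot X Y ^+ 2 <= mxdot X X * mxdot Y Y.
Proof.
have [Y0|Yn0] := eqVneq (mxdot Y Y) 0.
  by rewrite (mxdot_eq0 Y0) mxdot0r mxdot0r expr0n /= mulr0.
have Yp : 0 < mxdot Y Y by rewrite lt_def Yn0 mxdot_ge0.
set t := mxdot X Y / mxdot Y Y.
have := mxdot_ge0 (X - t *: Y).
rewrite !(mxdotBl, mxdotBr, mxdotZl, mxdotZr) (mxdotC Y X).
rewrite /t => h.
have : 0 <= mxdot X X * mxdot Y Y - mxdot X Y ^+ 2.
  have -> : mxdot X X * mxdot Y Y - mxdot X Y ^+ 2 = mxdot Y Y *
    (mxdot X X - mxdot X Y / mxdot Y Y * mxdot X Y -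
     mxdot X Y / mxdot Y Y *
     (mxdot X Y - mxdot X Y / mxdot Y Y * mxdot Y Y)).
    by field.
  by apply: mulr_ge0; [exact: ltW | exact: h].
by rewrite subr_ge0.
Qed.

End Dot.


Section H.
Context {R : realType}.

Lemma mul_row_delta {n} (x : 'rV[R]_n.+1) : x *m (delta_mx 0 0 : 'rV_n.+1)^T = (x 0 0)%:M.
Proof.
by rewrite trmx_delta -colE [LHS]mx11_scalar mxE.
Qed.

Lemma householder {n} {x : 'rV[R]_n.+1} : mxdot x x = 1 ->
  exists H : 'M[R]_n.+1, [/\ H^T = H, H *m H = 1%:M & delta_mx 0 0 *m H = x].
Proof.
move=> xu; set e := delta_mx 0 0 : 'rV_n.+1.
have ee : mxdot e e = 1 by rewrite mxdot_row mul_row_delta !mxE eqxx /=.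
have xe : mxdot x e = x 0 0 by rewrite mxdot_row mul_row_delta !mxE eqxx /=.
have [->|xne] := eqVneq x e; first by exists 1%:M; split; rewrite ?trmx1 ?mulmx1.
set w := x - e.
have w00 : w 0 0 = x 0 0 - 1 by rewrite !mxE eqxx.
have cw : mxdot w w = - 2 * w 0 0.
  rewrite /w !(mxdotBl, mxdotBr) xu ee xe (mxdotC e x) xe w00; ring.
have wn0 : mxdot w w != 0.
  apply/eqP => /mxdot_eq0 /eqP; rewrite subr_eq0 => /eqP; exact/eqP.
have w0n0 : w 0 0 != 0 by apply: contra wn0; rewrite cw => /eqP ->; rewrite mulr0.
set k := 2 / mxdot w w.
have ww : w *m w^T = (mxdot w w)%:M by rewrite mxdot_row -mx11_scalar.
have ew : e *m w^T = (w 0 0)%:M.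
  by rewrite -[e *m _]trmxK trmx_mul trmxK mul_row_delta tr_scalar_mx.
have xw : x = e + w by rewrite /w addrC subrK.
clearbody w.
exists (1%:M - k *: (w^T *m w)); split.
- by rewrite raddfB /= linearZ /= trmx1 trmx_mul trmxK.
- rewrite mulmxBl !mulmxBr !mul1mx ?mulmx1 -!scalemxAl -!scalemxAr scalerA.
  rewrite mulmxA -(mulmxA w^T) ww mul_mx_scalar -scalemxAl scalerA.
  have -> : k * k * mxdot w w = k + k by rewrite /k; field.
  by rewrite scalerDl opprB addrK subrK.
- rewrite mulmxBr mulmx1 -scalemxAr mulmxA ew mul_scalar_mx scalerA.
  have -> : k * w 0 0 = -1 by rewrite /k cw; field.
  by rewrite scaleN1r opprK xw.
Qed.
End H.


Lemma sym_eigen {R : realType} {n} {A : 'M[R]_n.+1} : A^T = A ->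
  exists (r : R) (v : 'rV[R]_n.+1), v != 0 /\ v *m A = r *: v.
Proof.
move=> As.
pose f := @real_complex_def R (Phant R).
pose Ac := map_mx f A.
have herm : Ac \is hermsymmx.
  apply: realsym_hermsym.
    apply/is_hermitianmxP; rewrite expr0 scale1r map_mx_id //.
    by rewrite /Ac map_trmx As.
  apply/mxOverP => i j; rewrite mxE /f.
  by rewrite realE -[0 : R[i]]/(f 0) /f !lecR -realE num_real.
have /hermitian_normalmx /orthomx_spectralP Aeq := herm.
set P := spectralmx Ac in Aeq; set d := spectral_diag Ac in Aeq.
have dreal := hermitian_spectral_diag_real herm; rewrite -/d in dreal.
have Pu : P \in unitmx by apply: spectral_unit.
pose w := (delta_mx 0 (0 : 'I_n.+1) : 'rV[R[i]]_n.+1) *m P.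
have ev : eigenvalue Ac (d 0 0).
  apply/eigenvalueP; exists w.
    rewrite /w Aeq !mulmxA mulmxK // scalemxAl; congr (_ *m _).
    apply/rowP=> j; rewrite !mxE (bigD1 0) //= big1 ?addr0.
      by rewrite !mxE eqxx /= mul1r; case: (altP (j =P 0)) => [->|nj]; rewrite ?eqxx ?mulr1n ?mulr1 // eq_sym (negbTE nj) ?mulr0n ?mulr0.
    by move=> k nk; rewrite !mxE (negbTE nk) mul0r.
  rewrite /w mulmx_free_eq0 ?row_free_unit //.
  by apply/eqP => /matrixP/(_ 0 0); rewrite !mxE eqxx /= => /eqP; rewrite oner_eq0.
have d0r : d 0 0 \is Num.real by apply: (mxOverP dreal).
exists (complex.Re (d 0 0)).
have : eigenvalue A (complex.Re (d 0 0)).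
  rewrite eigenvalue_root_char -(fmorph_root f) map_char_poly -eigenvalue_root_char.
  have E : f (complex.Re (d 0 0)) = d 0 0 by rewrite /f; have := complexRe (d 0 0); move=> ->; apply/Creal_ReP.
  by move: ev; rewrite -E.
by move/eigenvalueP => [v vA v0]; exists v.
Qed.

Section SVD.
Context {R : realType}.

Lemma normalize {m n} {v : 'M[R]_(m, n)} : v != 0 ->
  exists c : R, 0 < c /\ mxdot (c *: v) (c *: v) = 1.
Proof.
move=> vn0.
have cp : 0 < mxdot v v.
  by rewrite lt_def mxdot_ge0 andbT; apply: contra vn0 => /eqP/mxdot_eq0 ->.
exists (Num.sqrt (mxdot v v))^-1; split; first by rewrite invr_gt0 sqrtr_gt0.
rewrite mxdotZl mxdotZr mulrA -expr2 exprVn sqr_sqrtr ?ltW // mulVf //.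
by rewrite gt_eqF.
Qed.

Lemma singular_pair {n} (X : 'M[R]_n.+1) :
  exists (s : R) (u v : 'rV[R]_n.+1), [/\ 0 <= s, mxdot u u = 1, mxdot v v = 1,
    u *m X = s *: v & v *m X^T = s *: u].
Proof.
have Xs : (X^T *m X)^T = X^T *m X by rewrite trmx_mul trmxK.
have [r [v0 [v0n0 vA]]] := sym_eigen Xs.
have [c [cp vu]] := normalize v0n0.
set v := c *: v0 in vu.
have vA' : v *m (X^T *m X) = r *: v by rewrite /v -scalemxAl vA !scalerA mulrC.
set w := v *m X^T.
have wX : w *m X = r *: v by rewrite /w -mulmxA.
have ww : mxdot w w = r.
  by rewrite {1}/w mxdotMr trmxK wX mxdotZr vu mulr1.
have [w0|wn0] := eqVneq w 0.
  have : \det X = 0.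
    rewrite -det_tr; apply/eqP/det0P; exists v => //.
    by rewrite /v scaler_eq0 negb_or gt_eqF.
  move/eqP/det0P => [u0 u0n0 u0X].
  have [c' [c'p uu]] := normalize u0n0.
  exists 0, (c' *: u0), v; split => //.
  - by rewrite -scalemxAl u0X scaler0 scale0r.
  - by rewrite -/w w0 scale0r.
have rp : 0 < r.
  by rewrite -ww lt_def mxdot_ge0 andbT; apply: contra wn0 => /eqP/mxdot_eq0 ->.
set s := Num.sqrt r.
have sp : 0 < s by rewrite sqrtr_gt0.
have ss : s * s = r by rewrite -expr2 sqr_sqrtr // ltW.
exists s, (s^-1 *: w), v; split => //.
- exact: ltW.
- rewrite mxdotZl mxdotZr ww mulrA -ss; field; exact: lt0r_neq0.
- rewrite -scalemxAl wX scalerA -ss; congr (_ *: _); field; exact: lt0r_neq0.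
- by rewrite scalerA mulfV ?scale1r // lt0r_neq0.
Qed.


Lemma diag_mx1 (l : 'rV[R]_1) : diag_mx l = l.
Proof. by apply/matrixP => i j; rewrite !ord1 !mxE eqxx mulr1n. Qed.

Lemma orth_block {n} (H : 'M[R]_(1 + n)) (P' : 'M[R]_n) :
  H^T *m H = 1%:M -> P'^T *m P' = 1%:M ->
  (H *m block_mx (1%:M : 'M_1) 0 0 P')^T *m (H *m block_mx (1%:M : 'M_1) 0 0 P') = 1%:M.
Proof.
move=> HH PP.
rewrite trmx_mul mulmxA -(mulmxA _ H^T H) HH mulmx1 tr_block_mx mulmx_block.
by rewrite !trmx0 trmx1 !mulmx0 !mul0mx !mulmx1 !addr0 !add0r PP -scalar_mx_block.
Qed.

Lemma block_svd {n} (A B : 'M[R]_(1 + n)) (s : R) (P' Q' : 'M[R]_n) (d' : 'rV[R]_n) :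
  A *m block_mx (s%:M : 'M_1) 0 0 (P' *m diag_mx d' *m Q'^T) *m B^T =
  (A *m block_mx (1%:M : 'M_1) 0 0 P') *m diag_mx (row_mx (s%:M : 'rV_1) d') *m
  (B *m block_mx (1%:M : 'M_1) 0 0 Q')^T.
Proof.
rewrite diag_mx_row diag_mx1 trmx_mul -!mulmxA; congr (_ *m _).
rewrite !mulmxA; congr (_ *m _).
rewrite tr_block_mx !mulmx_block !trmx0 trmx1 !mulmx0 !mul0mx !mulmx1 !mul1mx !addr0 !add0r.
by rewrite mul0mx.
Qed.

Lemma svd_exists {n} (X : 'M[R]_n) : exists (P Q : 'M[R]_n) (d : 'rV[R]_n),
  [/\ P^T *m P = 1%:M, Q^T *m Q = 1%:M, (forall i, 0 <= d 0 i) &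
      X = P *m diag_mx d *m Q^T].
Proof.
elim: n X => [|n IH] X.
  exists 1%:M, 1%:M, 0; split; rewrite ?trmx1 ?mulmx1 //.
    by move=> i; rewrite mxE.
  by apply/matrixP => -[].
have [s [u [v [s0 uu vv uX vX]]]] := singular_pair X.
have [Hu [HuT HuH eHu]] := householder uu.
have [Hv [HvT HvH eHv]] := householder vv.
set e := delta_mx 0 0 : 'rV[R]_n.+1 in eHu eHv.
set Y := Hu *m X *m Hv.
have eY : e *m Y = s *: e.
  by rewrite /Y !mulmxA eHu uX -scalemxAl -eHv -mulmxA HvH mulmx1.
have eYt : e *m Y^T = s *: e.
  by rewrite /Y !trmx_mul HuT HvT !mulmxA eHv vX -scalemxAl -eHu -mulmxA HuH mulmx1.
have row0 : forall j, Y 0 j = s * (j == 0)%:R.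
  move=> j; have := congr1 (fun M : 'rV[R]_n.+1 => M 0 j) eY.
  by rewrite -rowE !mxE eqxx.
have col0 : forall i, Y i 0 = s * (i == 0)%:R.
  move=> i; have := congr1 (fun M : 'rV[R]_n.+1 => M 0 i) eYt.
  by rewrite -rowE !mxE eqxx.
have XY : X = Hu *m Y *m Hv.
  by rewrite /Y !mulmxA HuH mul1mx -mulmxA HvH mulmx1.
have l0 : lshift n (0 : 'I_1) = 0 :> 'I_n.+1 by apply/val_inj.
clearbody Y.
have Yb : Y = block_mx (s%:M : 'M_1) 0 0 (drsubmx (Y : 'M_(1 + n))).
  rewrite -{1}(submxK (Y : 'M_(1 + n))); f_equal.
  - by apply/matrixP => i j; rewrite !ord1 !mxE l0 row0 eqxx mulr1.
  - apply/matrixP => i j; rewrite !ord1 !mxE l0 row0.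
    suff -> : (rshift 1 j == 0 :> 'I_n.+1) = false by rewrite mulr0.
    by apply/negbTE; rewrite -val_eqE.
  - apply/matrixP => i j; rewrite !ord1 !mxE l0 col0.
    suff -> : (rshift 1 i == 0 :> 'I_n.+1) = false by rewrite mulr0.
    by apply/negbTE; rewrite -val_eqE.
have [P' [Q' [d' [P'o Q'o d'0 Y']]]] := IH (drsubmx (Y : 'M_(1 + n))).
exists (Hu *m block_mx (1%:M : 'M_1) 0 0 P'), (Hv *m block_mx (1%:M : 'M_1) 0 0 Q'),
  (row_mx (s%:M : 'rV_1) d'); split.
- by apply: orth_block => //; rewrite HuT.
- by apply: orth_block => //; rewrite HvT.
- move=> i; rewrite mxE; case: splitP => j _; last exact: d'0.
  by rewrite ord1 mxE eqxx mulr1n.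
- have := block_svd Hu Hv s P' Q' d'; rewrite HvT => <-.
  by rewrite XY Yb Y'.
Qed.

End SVD.


Section Main1.
Context {R : realType}.

Definition contr {n} (c : R) (M : 'M[R]_n) :=
  forall y : 'cV[R]_n, mxdot (M *m y) (M *m y) <= c ^+ 2 * mxdot y y.

Lemma mxdot_entry {n k} (A B : 'M[R]_(n, k)) (M : 'M[R]_n) i :
  (A^T *m M *m B) i i = mxdot (col i A) (M *m col i B).
Proof.
rewrite /mxdot /mxtrace big_ord1 colE colE trmx_mul trmx_delta.
by rewrite !mulmxA -colE -!mulmxA -rowE [RHS]mxE [RHS]mxE !mulmxA.
Qed.

Lemma le_of_sqr (x c : R) : 0 <= c -> x ^+ 2 <= c ^+ 2 -> x <= c.
Proof. by move=> c0 h; nra. Qed.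

Lemma contr_unit {n} (M : 'M[R]_n) c (a b : 'cV[R]_n) : 0 <= c -> contr c M ->
  mxdot a a = 1 -> mxdot b b = 1 -> mxdot a (M *m b) <= c.
Proof.
move=> c0 hM ha hb; apply: le_of_sqr => //.
apply: le_trans (mxdot_CS _ _) _; rewrite ha mul1r.
by have := hM b; rewrite hb mulr1.
Qed.

Lemma col_unit {n k} (A : 'M[R]_(n, k)) i : A^T *m A = 1%:M -> mxdot (col i A) (col i A) = 1.
Proof.
move=> hA; have := mxdot_entry A A 1%:M i; rewrite mulmx1 hA mul1mx mxE eqxx => <-.
by [].
Qed.

Lemma mxdot_diag {n} (d : 'rV[R]_n) (N : 'M[R]_n) :
  mxdot (diag_mx d) N = \sum_i d 0 i * N i i.
Proof.
rewrite mxdotE; apply: eq_bigr => i _; rewrite (bigD1 i) //= big1 ?addr0.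
  by rewrite mxE eqxx mulr1n.
by move=> j /negbTE ji; rewrite mxE eq_sym ji mulr0n mul0r.
Qed.

Lemma dual_bound {n k} (M : 'M[R]_n) c (A B : 'M[R]_(n, k)) (d : 'rV[R]_k) :
  0 <= c -> contr c M -> A^T *m A = 1%:M -> B^T *m B = 1%:M ->
  (forall i, 0 <= d 0 i) ->
  mxdot M (A *m diag_mx d *m B^T) <= c * \sum_i d 0 i.
Proof.
move=> c0 hM hA hB d0.
rewrite mxdotC -mulmxA mxdotMl mxdotMr trmxK mxdot_diag mulr_sumr.
apply: ler_sum => i _; rewrite mulrC; apply: ler_wpM2r => //.
rewrite mxdot_entry; apply: contr_unit => //; exact: col_unit.
Qed.

Lemma mxdot_orth {n k} (A B : 'M[R]_(n, k)) (X Y : 'M[R]_k) :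
  A^T *m A = 1%:M -> B^T *m B = 1%:M ->
  mxdot (A *m X *m B^T) (A *m Y *m B^T) = mxdot X Y.
Proof.
move=> hA hB; rewrite -mulmxA mxdotMl mxdotMr trmxK !mulmxA hA mul1mx.
by rewrite -mulmxA hB mulmx1.
Qed.

Lemma mxdot_diag1 {n} (d : 'rV[R]_n) : mxdot (1%:M : 'M[R]_n) (diag_mx d) = \sum_i d 0 i.
Proof. by rewrite mxdotC mxdot_diag; apply: eq_bigr => i _; rewrite mxE eqxx mulr1. Qed.

Lemma mxdot_sv {n k} (A B : 'M[R]_(n, k)) (d : 'rV[R]_k) :
  A^T *m A = 1%:M -> B^T *m B = 1%:M ->
  mxdot (A *m B^T) (A *m diag_mx d *m B^T) = \sum_i d 0 i.
Proof.
move=> hA hB; rewrite -{1}[A]mulmx1 mxdot_orth //; exact: mxdot_diag1.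
Qed.

Lemma contr_orth {n} (P Q : 'M[R]_n) : P^T *m P = 1%:M -> Q^T *m Q = 1%:M ->
  contr 1 (P *m Q^T).
Proof.
move=> hP hQ y; rewrite expr1n mul1r -!mulmxA mxdotMl mulmxA hP mul1mx mxdotMl trmxK mulmxA.
by rewrite (mulmx1C hQ) mul1mx.
Qed.

Lemma contr_diag {n} (P Q : 'M[R]_n) (e : 'rV[R]_n) b :
  P^T *m P = 1%:M -> Q^T *m Q = 1%:M -> (forall i, 0 <= e 0 i <= b) ->
  contr b (P *m diag_mx e *m Q^T).
Proof.
move=> hP hQ he y.
rewrite -!mulmxA mxdotMl (mulmxA P^T P) hP mul1mx.
have -> : mxdot y y = mxdot (Q^T *m y) (Q^T *m y).
  by rewrite mxdotMl trmxK mulmxA (mulmx1C hQ) mul1mx.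
set z := Q^T *m y.
rewrite !mxdotE mulr_sumr; apply: ler_sum => i _.
rewrite !big_ord1 mul_diag_mx mxE.
have /andP [e0 eb] := he i.
have h1 : e 0 i * e 0 i <= b ^+ 2 by rewrite expr2; apply: ler_pM.
have h2 : 0 <= z i 0 * z i 0 by rewrite -expr2 sqr_ge0.
have -> : e 0 i * z i 0 * (e 0 i * z i 0) = (e 0 i * e 0 i) * (z i 0 * z i 0) by ring.
exact: ler_wpM2r.
Qed.

End Main1.


Section Main2.
Context {R : realType}.

Lemma sq_bound (x b : R) : x ^+ 2 <= b -> x <= 1 + b.
Proof. move=> h; nra. Qed.

Lemma bigmax_ge {I : finType} (f : I -> R) i : f i <= \big[Num.max/0]_j f j.
Proof. by rewrite (bigD1 i) //= le_max lexx. Qed.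

Lemma bigmax_ge0 {I : finType} (f : I -> R) : 0 <= \big[Num.max/0]_j f j.
Proof. by elim/big_rec: _ => // i x _ hx; rewrite le_max hx orbT. Qed.

Lemma bigmax_le {I : finType} (f : I -> R) b : 0 <= b -> (forall i, f i <= b) ->
  \big[Num.max/0]_j f j <= b.
Proof. by move=> b0 hf; elim/big_ind: _ => // x y hx hy; rewrite ge_max hx hy. Qed.

Lemma mxdot11 {n} : mxdot (1%:M : 'M[R]_n) 1%:M = n%:R.
Proof. by rewrite /mxdot trmx1 mulmx1 mxtrace1. Qed.

Lemma nuc_ub {n} (X : 'M[R]_n) :
  has_ubound [set t | exists d, is_sv_vector X d /\ t = \sum_i d 0 i].
Proof.
exists (1 + n%:R * mxdot X X) => t [d' [[hd' [P' [Q' [hP' [hQ' hX']]]]] ->]].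
have e : \sum_i d' 0 i = mxdot (P' *m Q'^T) X by rewrite hX' mxdot_sv.
rewrite e; apply: sq_bound; apply: le_trans (mxdot_CS _ _) _.
by rewrite -{1 2}[P']mulmx1 mxdot_orth // mxdot11.
Qed.

Lemma nuc_ge {n} (X M : 'M[R]_n) : contr 1 M -> mxdot M X <= nucnorm X.
Proof.
move=> hM; have [P [Q [d [hP hQ hd hX]]]] := svd_exists X.
apply: (@le_trans _ _ (\sum_i d 0 i)).
  by rewrite hX; have := dual_bound _ _ _ _ _ ler01 hM hP hQ hd; rewrite mul1r.
apply: (ub_le_sup (nuc_ub X)); exists d; split => //; split => //.
by exists P, Q.
Qed.

Lemma nuc_le {n r} (U V : 'M[R]_(n, r)) (s : 'rV[R]_r) :
  U^T *m U = 1%:M -> V^T *m V = 1%:M -> (forall i, 0 <= s 0 i) ->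
  nucnorm (U *m diag_mx s *m V^T) <= \sum_i s 0 i.
Proof.
move=> hU hV hs; apply: ge_sup.
  have [P [Q [d [hP hQ hd hX]]]] := svd_exists (U *m diag_mx s *m V^T).
  exists (\sum_i d 0 i), d; split => //; split => //; by exists P, Q.
move=> t [d' [[hd' [P' [Q' [hP' [hQ' hX']]]]] ->]].
have e : \sum_i d' 0 i = mxdot (P' *m Q'^T) (U *m diag_mx s *m V^T).
  by rewrite hX' mxdot_sv.
rewrite e; have := dual_bound _ _ _ _ _ ler01 (@contr_orth _ _ P' Q' hP' hQ') hU hV hs.
by rewrite mul1r.
Qed.

Lemma spec_contr {n} (W : 'M[R]_n) :
  exists b, [/\ 0 <= b, b <= specnorm W & contr b W].
Proof.
have [P [Q [e [hP hQ he hW]]]] := svd_exists W.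
exists (\big[Num.max/0]_i e 0 i); split.
- exact: bigmax_ge0.
- apply: ub_le_sup; last by exists e; split => //; split => //; exists P, Q.
  exists (1 + mxdot W W) => t [e' [[he' [P' [Q' [hP' [hQ' hW']]]]] ->]].
  apply: bigmax_le.
    by apply: addr_ge0 => //; apply: mxdot_ge0.
  move=> i; apply: sq_bound.
  rewrite hW' mxdot_orth // mxdot_diag (bigD1 i) //= mxE eqxx mulr1n -expr2.
  rewrite lerDl; apply: sumr_ge0 => j _; rewrite mxE eqxx mulr1n; exact: mulr_ge0.
- rewrite hW; apply: contr_diag => // i; rewrite he /=; exact: bigmax_ge.
Qed.

Lemma diag_mxM {n} (a b : 'rV[R]_n) :
  diag_mx a *m diag_mx b = diag_mx (\row_i (a 0 i * b 0 i)).
Proof.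
apply/matrixP => i j; rewrite mul_diag_mx !mxE.
by case: (i == j); rewrite ?mulr1n ?mulr0n ?mulr0.
Qed.

Lemma W0_exists {n r} (U V : 'M[R]_(n, r)) (G : 'M[R]_n) :
  U^T *m G = 0 -> G *m V = 0 ->
  exists (W0 : 'M[R]_n) (nu : R),
   [/\ contr 1 W0, U^T *m W0 = 0, W0 *m V = 0 & mxdot W0 G = nu] /\
   [/\ 0 <= nu, (nu = 0 -> G = 0) &
       (forall b W, 0 <= b -> contr b W -> mxdot W G <= b * nu)].
Proof.
move=> hUG hGV.
have [P [Q [d [hP hQ hd hG]]]] := svd_exists G.
pose s := \row_i (d 0 i * (d 0 i)^-1).
pose t := \row_i ((d 0 i)^-1).
have sdt : \row_i (d 0 i * t 0 i) = s by apply/rowP => i; rewrite !mxE.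
have std : \row_i (t 0 i * d 0 i) = s by apply/rowP => i; rewrite !mxE mulrC.
have sd : forall i, s 0 i * d 0 i = d 0 i.
  move=> i; rewrite mxE; have [->|dn0] := eqVneq (d 0 i) 0; first by rewrite !mul0r.
  by rewrite mulfV // mul1r.
exists (P *m diag_mx s *m Q^T), (\sum_i d 0 i); split; split.
- apply: contr_diag => // i; rewrite mxE.
  have [->|dn0] := eqVneq (d 0 i) 0; first by rewrite mul0r lexx ler01.
  by rewrite mulfV // ler01 lexx.
- have -> : P *m diag_mx s *m Q^T = G *m (Q *m diag_mx t *m Q^T).
    by rewrite hG -!mulmxA (mulmxA Q^T) hQ mul1mx (mulmxA (diag_mx d)) diag_mxM sdt.
  by rewrite mulmxA hUG mul0mx.
- have -> : P *m diag_mx s *m Q^T = (P *m diag_mx t *m P^T) *m G.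
    by rewrite hG !mulmxA -(mulmxA _ P^T P) hP mulmx1 -(mulmxA P (diag_mx t)) diag_mxM std.
  by rewrite -mulmxA hGV mulmx0.
- rewrite hG mxdot_orth // mxdot_diag; apply: eq_bigr => i _.
  by rewrite [diag_mx d i i]mxE eqxx mulr1n sd.
- by apply: sumr_ge0 => i _; apply: hd.
- move=> /eqP; rewrite psumr_eq0 // => /allP h0.
  rewrite hG; have -> : d = 0.
    apply/rowP => i; rewrite !mxE.
    by have /h0 /eqP := (mem_index_enum i).
  by rewrite (_ : diag_mx 0 = 0) ?mulmx0 ?mul0mx //; apply/matrixP => i j; rewrite !mxE mul0rn.
- move=> b W b0 hW; rewrite hG; exact: dual_bound.
Qed.

End Main2.


Section Main3.
Context {R : realType}.

Lemma inT_sub {n r} {U V : 'M[R]_(n, r)} {Z1 Z2} :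
  inT U V Z1 -> inT U V Z2 -> inT U V (Z1 - Z2).
Proof.
move=> [X1 [Y1 ->]] [X2 [Y2 ->]]; exists (X1 - X2), (Y1 - Y2).
by rewrite raddfB /= mulmxBr mulmxBl opprD addrACA.
Qed.

Lemma inT_scale {n r} {U V : 'M[R]_(n, r)} c {Z} : inT U V Z -> inT U V (c *: Z).
Proof.
move=> [X [Y ->]]; exists (c *: X), (c *: Y).
by rewrite linearZ /= -scalemxAr -scalemxAl scalerDr.
Qed.

Lemma PT_fix {n r} {U V : 'M[R]_(n, r)} {PT Z} :
  is_orth_proj_T U V PT -> inT U V Z -> PT Z = Z.
Proof.
move=> hPT hZ; have [hT horth] := hPT Z.
have hD := inT_sub hT hZ; have := horth _ hD.
rewrite (_ : Z - PT Z = - (PT Z - Z)); last by rewrite opprB.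
rewrite mxdotNl => /eqP; rewrite oppr_eq0 => /eqP /mxdot_eq0 /eqP.
by rewrite subr_eq0 => /eqP.
Qed.

Lemma PT_le {n r} {U V : 'M[R]_(n, r)} {PT} X :
  is_orth_proj_T U V PT -> mxdot (PT X) (PT X) <= mxdot X X.
Proof.
move=> hPT; have [hT horth] := hPT X; have h0 := horth _ hT.
have -> : mxdot X X = mxdot (X - PT X + PT X) (X - PT X + PT X) by rewrite subrK.
move: (X - PT X) h0 => a h0.
rewrite mxdotDl !mxdotDr h0 (mxdotC (PT X)) h0 add0r addr0 lerDr.
exact: mxdot_ge0.
Qed.

Lemma orth_T {n r} (U V : 'M[R]_(n, r)) W Z :
  U^T *m W = 0 -> W *m V = 0 -> inT U V Z -> mxdot W Z = 0.
Proof.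
move=> hUW hWV [X [Y ->]].
rewrite mxdotDr mxdotC mxdotMl hUW mxdot0r add0r mxdotC mxdotMr trmxK hWV.
exact: mxdot0r.
Qed.

Lemma T_decomp {n r} (U V : 'M[R]_(n, r)) (H : 'M[R]_n) :
  inT U V (H - (1%:M - U *m U^T) *m H *m (1%:M - V *m V^T)).
Proof.
exists (H^T *m U), (H *m V - U *m (U^T *m H *m V)).
rewrite trmx_mul trmxK mulmxBl mulmxBr mulmxBl !mul1mx !mulmx1 !mulmxA.
move: (U *m U^T *m H) => a.
rewrite !mulmxBl ?mulmxA; move: (H *m V *m V^T) (a *m V *m V^T) => b c.
by apply/matrixP => i j; rewrite !mxE; ring.
Qed.

Lemma contr_sum {n r} (U V : 'M[R]_(n, r)) (W0 : 'M[R]_n) :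
  U^T *m U = 1%:M -> V^T *m V = 1%:M -> U^T *m W0 = 0 -> W0 *m V = 0 ->
  contr 1 W0 -> contr 1 (U *m V^T + W0).
Proof.
move=> hU hV hUW hWV hW y.
set z := V^T *m y.
have e1 : mxdot (U *m z) (W0 *m y) = 0 by rewrite mxdotMl mulmxA hUW mul0mx mxdot0r.
have e2 : mxdot (U *m z) (U *m z) = mxdot z z by rewrite mxdotMl mulmxA hU mul1mx.
have e3 : W0 *m y = W0 *m (y - V *m z) by rewrite mulmxBr mulmxA hWV mul0mx subr0.
have e4 : mxdot (y - V *m z) (y - V *m z) = mxdot y y - mxdot z z.
  rewrite !(mxdotBl, mxdotBr) (mxdotC y (V *m z)) mxdotMl -/z mxdotMl mulmxA hV mul1mx.
  ring.
have h := hW (y - V *m z); rewrite -e3 e4 expr1n mul1r in h.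
rewrite mulmxDl -mulmxA -/z !(mxdotDl, mxdotDr) e1 (mxdotC (W0 *m y)) e1 e2 expr1n mul1r.
lra.
Qed.

Definition kap {n} (S0 H : 'M[R]_n) :=
  \sum_i \sum_j (if S0 i j == 0 then `|H i j| else 0).

Lemma l1_term (s h : R) :
  `|s| - Num.sg s * h + (if s == 0 then `|h| else 0) <= `|s - h|.
Proof.
have [->|sn0] := eqVneq s 0; first by rewrite normr0 sgr0 mul0r subr0 add0r sub0r normrN.
rewrite addr0 normrEsg -mulrBr; apply: le_trans (ler_norm _) _.
by rewrite normrM normr_sg sn0 mul1r.
Qed.

Lemma l1_bound {n} (S0 H : 'M[R]_n) :
  l1norm S0 - mxdot (sgnmx S0) H + kap S0 H <= l1norm (S0 - H).
Proof.
rewrite /l1norm mxdotE /kap -sumrB -big_split /=; apply: ler_sum => i _.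
rewrite -sumrB -big_split /=; apply: ler_sum => j _.
rewrite !mxE; exact: l1_term.
Qed.

Lemma F_bound {n} (S0 F H : 'M[R]_n) g :
  (forall i j, S0 i j != 0 -> F i j = 0) -> (forall i j, `|F i j| <= g) ->
  - (g * kap S0 H) <= mxdot F H.
Proof.
move=> hz hg; rewrite mxdotE /kap mulr_sumr -sumrN; apply: ler_sum => i _.
rewrite mulr_sumr -sumrN; apply: ler_sum => j _.
have [s0|sn0] := eqVneq (S0 i j) 0; last by rewrite hz // mul0r mulr0 oppr0.
have := ler_norm (- (F i j * H i j)); rewrite normrN normrM => h1.
have h2 := hg i j; have h3 := normr_ge0 (H i j); nra.
Qed.

Lemma POmega_le {n} (S0 Z : 'M[R]_n) :
  mxdot (POmega S0 Z) (POmega S0 Z) <= mxdot Z Z.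
Proof.
rewrite !mxdotE; apply: ler_sum => i _; apply: ler_sum => j _; rewrite !mxE.
by case: ifP => _; rewrite ?lexx // mul0r -expr2 sqr_ge0.
Qed.

Lemma POmegaZ {n} (S0 Z : 'M[R]_n) c : POmega S0 (c *: Z) = c *: POmega S0 Z.
Proof. by apply/matrixP => i j; rewrite !mxE; case: ifP; rewrite ?mulr0. Qed.

Lemma OmegaT {n r} (U V : 'M[R]_(n, r)) PT (S0 H : 'M[R]_n) :
  is_orth_proj_T U V PT -> opnorm (fun X => POmega S0 (PT X)) < 1 ->
  inT U V H -> POmega S0 H = H -> H = 0.
Proof.
move=> hPT hnorm hH hO; apply/eqP; apply: contraTT hnorm => Hn0.
rewrite -leNgt.
have [c [c0 cu]] := normalize Hn0.
have hX := inT_scale c hH.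
have fX : POmega S0 (PT (c *: H)) = c *: H by rewrite (PT_fix hPT hX) POmegaZ hO.
apply: ub_le_sup.
  exists 1 => t [X [hX1 ->]].
  apply: le_trans hX1; apply: ler_wsqrtr.
  apply: le_trans (POmega_le _ _) _; exact: PT_le.
by exists (c *: H); rewrite /frob fX cu sqrtr1; split.
Qed.

End Main3.


Theorem lemma2p3 (R : realType) (n r : nat) (L0 S0 : 'M[R]_n)
  (U V : 'M[R]_(n, r)) (sigma : 'rV[R]_r) (lambda : R)
  (PT : 'M[R]_n -> 'M[R]_n)
  (hU : U^T *m U = 1%:M) (hV : V^T *m V = 1%:M)
  (hsigma : forall i, 0 < sigma 0 i)
  (hsvd : L0 = U *m diag_mx sigma *m V^T)
  (hlambda : 0 < lambda)
  (hPT : is_orth_proj_T U V PT)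
  (hnorm : opnorm (fun X => POmega S0 (PT X)) < 1) :
  (exists W F : 'M[R]_n,
     U *m V^T + W = lambda *: (sgnmx S0 + F) /\
     PT W = 0 /\ specnorm W < 1 /\ POmega S0 F = 0 /\ linfnorm F < 1) ->
  (forall L S : 'M[R]_n, L + S = L0 + S0 ->
     nucnorm L0 + lambda * l1norm S0 <= nucnorm L + lambda * l1norm S) /\
  (forall L S : 'M[R]_n, L + S = L0 + S0 ->
     nucnorm L + lambda * l1norm S = nucnorm L0 + lambda * l1norm S0 ->
     L = L0 /\ S = S0).
Proof.
move=> [W [F [hWF [hPTW [hW [hOF hF]]]]]].
have hWT : forall Z, inT U V Z -> mxdot W Z = 0.
  by move=> Z hZ; have [_ h] := hPT W; have := h Z hZ; rewrite hPTW subr0.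
have [b [b0 bspec bW]] := spec_contr W.
have b1 : b < 1 := le_lt_trans bspec hW.
set g := linfnorm F in hF.
have Fg : forall i j, `|F i j| <= g.
  move=> i j; apply: le_trans (bigmax_ge (fun i => \big[Num.max/0]_j `|F i j|) i).
  exact: (bigmax_ge (fun j => `|F i j|) j).
have Fz : forall i j, S0 i j != 0 -> F i j = 0.
  by move=> i j hs; have := congr1 (fun M : 'M[R]_n => M i j) hOF; rewrite !mxE hs.
have sig0 : forall i, 0 <= sigma 0 i by move=> i; exact: ltW.
have nucL0 : nucnorm L0 <= \sum_i sigma 0 i by rewrite hsvd; exact: nuc_le.
have UVL0 : mxdot (U *m V^T) L0 = \sum_i sigma 0 i by rewrite hsvd mxdot_sv.
have L0T : inT U V L0.
  by exists (diag_mx sigma *m V^T)^T, 0; rewrite trmxK mul0mx addr0 hsvd mulmxA.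
have key : forall L S, L + S = L0 + S0 -> exists a c, [/\ 0 <= a, 0 <= c,
    nucnorm L0 + lambda * l1norm S0 + a + c <= nucnorm L + lambda * l1norm S &
    (a = 0 -> c = 0 -> L = L0)].
  move=> L S hLS.
  set H := L - L0.
  have hS : S = S0 - H.
    by apply/(addrI L); rewrite hLS /H; apply/matrixP => i j; rewrite !mxE; ring.
  have hL : L = L0 + H by rewrite /H addrC subrK.
  clearbody H.
  set G := (1%:M - U *m U^T) *m H *m (1%:M - V *m V^T).
  have hUG : U^T *m G = 0.
    by rewrite /G !mulmxA (mulmxBr U^T) mulmx1 mulmxA hU mul1mx subrr !mul0mx.
  have hGV : G *m V = 0.
    by rewrite /G -mulmxA (mulmxBl _ _ V) mul1mx -(mulmxA V) hV mulmx1 subrr !mulmx0.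
  have [W0 [nu [[cW0 UW0 W0V W0G] [nu0 nuG Gbound]]]] := W0_exists _ _ _ hUG hGV.
  have HGT : inT U V (H - G) := T_decomp U V H.
  have cM := contr_sum _ _ _ hU hV UW0 W0V cW0.
  have h1 := nuc_ge L _ cM.
  have eW0H : mxdot W0 H = nu.
    by rewrite -[H](subrK G) mxdotDr (orth_T _ _ _ _ UW0 W0V HGT) add0r W0G.
  have eWH : mxdot W H = mxdot W G.
    by rewrite -[H](subrK G) mxdotDr (hWT _ HGT) add0r.
  have hWG := Gbound b W b0 bW.
  have eUV : U *m V^T = lambda *: (sgnmx S0 + F) - W by rewrite -hWF addrK.
  have eM : mxdot (U *m V^T + W0) L = \sum_i sigma 0 i +
      (lambda * mxdot (sgnmx S0) H + lambda * mxdot F H - mxdot W G) + nu.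
    rewrite hL mxdotDl !mxdotDr UVL0 (orth_T _ _ _ _ UW0 W0V L0T) eW0H add0r.
    by rewrite {1}eUV mxdotBl mxdotZl mxdotDl eWH mulrDr addrA.
  have hFb := F_bound _ _ H _ Fz Fg.
  have hl1 := l1_bound S0 H; rewrite -hS in hl1.
  have hl1' : lambda * (l1norm S0 - mxdot (sgnmx S0) H + kap S0 H) <=
              lambda * l1norm S by apply: ler_wpM2l => //; exact: ltW.
  have hFb' : lambda * (- (g * kap S0 H)) <= lambda * mxdot F H.
    by apply: ler_wpM2l => //; exact: ltW.
  have kap0 : 0 <= kap S0 H.
    apply: sumr_ge0 => i _; apply: sumr_ge0 => j _; by case: ifP.
  exists ((1 - b) * nu), (lambda * (1 - g) * kap S0 H); split.
  - by apply: mulr_ge0 => //; rewrite subr_ge0 ltW.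
  - by apply: mulr_ge0 => //; apply: mulr_ge0; rewrite ?subr_ge0 ltW.
  - rewrite mulrDr mulrBr in hl1'.
    have e1 : (1 - b) * nu = nu - b * nu by ring.
    have e2 : lambda * (1 - g) * kap S0 H = lambda * kap S0 H + lambda * (- (g * kap S0 H)) by ring.
    rewrite e1 e2; lra.
  - move=> /eqP; rewrite mulf_eq0 subr_eq0 eq_sym (lt_eqF b1) /= => /eqP nu00.
    move=> /eqP; rewrite !mulf_eq0 (gt_eqF hlambda) subr_eq0 eq_sym.
    rewrite (lt_eqF hF) /= => /eqP k0.
    have G0 := nuG nu00.
    have HT : inT U V H by move: HGT; rewrite G0 subr0.
    have HO : POmega S0 H = H.
      apply/matrixP => i j; rewrite mxE; case: ifP => // /negbFE s0.
      move: k0; rewrite /kap => /eqP; rewrite psumr_eq0; last first.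
        by move=> i' _; apply: sumr_ge0 => j' _; case: ifP.
      move=> /allP /(_ i (mem_index_enum _)) /eqP /eqP; rewrite psumr_eq0; last first.
        by move=> j' _; case: ifP.
      move=> /allP /(_ j (mem_index_enum _)); rewrite s0 normr_eq0 => /eqP ->.
      by [].
    have H0 := OmegaT _ _ _ _ _ hPT hnorm HT HO.
    by rewrite hL H0 addr0.
split.
  move=> L S hLS; have [a [c [a0 c0 h _]]] := key L S hLS; lra.
move=> L S hLS heq; have [a [c [a0 c0 h hL]]] := key L S hLS.
have a00 : a = 0 by lra.
have c00 : c = 0 by lra.
have LL := hL a00 c00; split => //.
by move: hLS; rewrite LL => /addrI.
Qed.
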